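(* Let $(X,\mathcal A,\mathfrak m)$ be a probability space. Then $\|\cdot\|_{0^+}$ and $\|\cdot\|_{0^-}$ are hyperbolic norms on ${\sf L}(X)$, and $$\int fg\,d\mathfrak m\ge\|f\|_{0^+}\|g\|_{0^-}\qquad\forall f,g\in{\sf L}(X),$$ $$\|f\|_{0^\pm}=\inf\Big\{\int fg\,d\mathfrak m:\ g\in{\sf L}(X),\ \|g\|_{0^\mp}\ge1\Big\}\qquad\forall f\in{\sf L}(X),$$ $$\|f\|_{0^\pm}=\frac{1}{\|1/f\|_{0^\mp}}\qquad\forall f\in{\sf L}(X).$$
   Context: ${\sf L}(X)$ is the set of $\mathcal A$-measurable functions $X\to[0,+\infty]$ modulo $\mathfrak m$-a.e. equality, with pointwise sum and multiplication by nonnegative scalars (a prewedge). Conventions: $0\cdot(+\infty)=0$, $\log 0=-\infty$, $\log(+\infty)=+\infty$, $\exp(-\infty)=0$, $\exp(+\infty)=+\infty$, $1/0=+\infty$, $1/(+\infty)=0$. For measurable $\varphi:X\to[-\infty,+\infty]$, $\int\varphi\,d\mathfrak m$ is well defined when at most one of $\int\varphi^+d\mathfrak m$, $\int\varphi^-d\mathfrak m$ is $+\infty$; $\int_+\varphi\,d\mathfrak m$ equals $\int\varphi\,d\mathfrak m$ if well defined and $+\infty$ otherwise, $\int_-\varphi\,d\mathfrak m$ equals $\int\varphi\,d\mathfrak m$ if well defined and $-\infty$ otherwise. Define $\|f\|_{0^+}:=\exp(\int_+\log f\,d\mathfrak m)$ and $\|f\|_{0^-}:=\exp(\int_-\log f\,d\mathfrak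 m)$. A hyperbolic norm on a prewedge $W$ is a map ${\sf hn}:W\to[0,\infty]$ with ${\sf hn}(0)=0$ and ${\sf hn}(\lambda_1v_1+\lambda_2v_2)\ge\lambda_1{\sf hn}(v_1)+\lambda_2{\sf hn}(v_2)$ for all $\lambda_i\in[0,\infty)$. *)

(* Defs.v *)
From HB Require Import structures.
From mathcomp Require Import all_boot all_order all_algebra.
From mathcomp Require Import all_classical all_reals all_analysis.
From mathcomp Require Import measurable_realfun.
Set Implicit Arguments. Unset Strict Implicit. Unset Printing Implicit Defensive.
Import Order.TTheory GRing.Theory Num.Theory.
Local Open Scope classical_set_scope.
Local Open Scope ring_scope.
Local Open Scope ereal_scope.

Section Defs.
Context {d : measure_display} {T : measurableType d} {R : realType}.
Variable mu : {measure set T -> \bar R}.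

(* representatives of elements of L(X): measurable functions X -> [0,+oo] *)
Definition Lset : set (T -> \bar R) :=
  [set f : T -> \bar R | measurable_fun setT f /\ forall x, 0 <= f x].

Definition ae_eq (f g : T -> \bar R) : Prop := {ae mu, forall x, f x = g x}.

(* prewedge operations: pointwise sum and nonnegative scalar multiple
   (with 0 * (+oo) = 0, which is MathComp's convention) *)
Definition Ladd (f g : T -> \bar R) : T -> \bar R := fun x => f x + g x.
Definition Lscale (l : R) (f : T -> \bar R) : T -> \bar R := fun x => l%:E * f x.
Definition Lzero : T -> \bar R := fun _ => 0.

Definition is_hyperbolic_norm (hn : (T -> \bar R) -> \bar R) : Prop :=
  [/\ (forall f g, Lset f -> Lset g -> ae_eq f g -> hn f = hn g),
      (forall f, Lset f -> 0 <= hn f),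
      hn Lzero = 0 &
      (forall (l1 l2 : R) f1 f2, (0 <= l1)%R -> (0 <= l2)%R -> Lset f1 -> Lset f2 ->
         hn (Ladd (Lscale l1 f1) (Lscale l2 f2)) >= l1%:E * hn f1 + l2%:E * hn f2)].

Definition int_plus (phi : T -> \bar R) : \bar R :=
  if (\int[mu]_x (phi^\+ x) == +oo) && (\int[mu]_x (phi^\- x) == +oo)
  then +oo else \int[mu]_x phi x.
Definition int_minus (phi : T -> \bar R) : \bar R :=
  if (\int[mu]_x (phi^\+ x) == +oo) && (\int[mu]_x (phi^\- x) == +oo)
  then -oo else \int[mu]_x phi x.

(* log 0 = -oo, log +oo = +oo (lne); exp -oo = 0, exp +oo = +oo (expeR) *)
Definition norm0p (f : T -> \bar R) : \bar R := expeR (int_plus (fun x => lne (f x))).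
Definition norm0m (f : T -> \bar R) : \bar R := expeR (int_minus (fun x => lne (f x))).

End Defs.

Definition einv {R : realType} (x : \bar R) : \bar R :=
  match x with
  | r%:E => if r == 0%R then +oo else (r^-1)%:E
  | +oo => 0
  | -oo => 0
  end.

(* Main.v *)
Require Import Defs.
From HB Require Import structures.
From mathcomp Require Import all_boot all_order all_algebra.
From mathcomp Require Import all_classical all_reals all_analysis.
From mathcomp Require Import measurable_realfun.
From mathcomp Require Import ring lra.
Import Order.TTheory GRing.Theory Num.Theory.
Local Open Scope classical_set_scope.
Local Open Scope ereal_scope.
Section pw.
Context {R : realType}.
Implicit Types (x y a b : \bar R).

Lemma lne_einv x : 0 <= x -> lne (einv x) = - lne x.
Proof.
case: x => [r||] //=; last by rewrite lexx.
rewrite lee_fin => r0.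
have [->|rn0] := eqVneq r 0%R; first by rewrite lexx.
have r0' : (0 < r)%R by rewrite lt_neqAle eq_sym rn0.
by rewrite /= !leNgt invr_gt0 r0' /= lnV ?posrE.
Qed.

Lemma lne_scale (c : R) x : (0 < c)%R -> 0 <= x -> lne (c%:E * x) = (ln c)%:E + lne x.
Proof.
move=> c0; case: x => [r||] //=; rewrite ?lee_fin => r0.
- have [->|rn0] := eqVneq r 0%R; first by rewrite mulr0 lexx.
  have r0' : (0 < r)%R by rewrite lt_neqAle eq_sym rn0.
  by rewrite leNgt mulr_gt0 //= leNgt r0' /= lnM ?posrE.
- by rewrite gt0_muley ?lte_fin //.
Qed.

Lemma expeRN_einv y : expeR (- y) = einv (expeR y).
Proof.
case: y => [r||] //=.
by rewrite gt_eqF ?expR_gt0 // expRN.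
by rewrite eqxx.
Qed.



Lemma einvK x : 0 <= x -> einv (einv x) = x.
Proof.
case: x => [r||] //=; rewrite ?lee_fin => r0.
- have [->|rn0] := eqVneq r 0%R; first by [].
  by rewrite /= invr_eq0 (negbTE rn0) invrK.
- by rewrite eqxx.
Qed.

Lemma lne_pos_le x : 0 <= x -> maxe (lne x) 0 <= x.
Proof.
move=> x0; rewrite ge_max x0 andbT.
case: x x0 => [r||] //=; rewrite ?lee_fin => r0.
case: ifPn => [_|r0']; first by rewrite leNye.
  rewrite -ltNge in r0'.
rewrite lee_fin; exact/ltW/ln_sublinear.
Qed.

Lemma lne_jensen_pw (c : R) x : (0 < c)%R -> 0 <= x ->
  lne x <= (ln c - 1)%:E + x * (c^-1)%:E.
Proof.
move=> c0; case: x => [r||] //=; rewrite ?lee_fin => r0.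
- case: ifPn => [_|r0']; first by rewrite leNye.
  rewrite -ltNge in r0'.
  rewrite -EFinM -EFinD lee_fin.
  have h : (ln (r / c) <= r / c - 1)%R.
    have e : (1 + (r / c - 1) = r / c)%R by rewrite addrC subrK.
    rewrite -[in X in (ln X <= _)%R]e; apply: le_ln1Dx.
    have : (0 < r / c)%R by rewrite divr_gt0.
    lra.
  by move: h; rewrite ln_div ?posrE // lerBlDr => h; lra.
- by rewrite gt0_mulye ?lte_fin ?invr_gt0 // addey.
Qed.

Lemma mx0 (r : R) : maxe r%:E 0 = (Num.max r 0)%:E.
Proof. by rewrite EFin_max. Qed.

Ltac ecases a b := case: a => [?||]; case: b => [?||] //=;
  rewrite ?(addNye, addeNy, addye, addey) //;
  rewrite -?EFinD -?EFinN ?maxNye ?maxye ?mx0 /= ?leey ?leNye ?lee_fin -?EFinD ?lee_fin //;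
  rewrite ?maxEle; repeat case: ifPn; rewrite -?ltNge; lra.

Lemma pw_identity a b :
  maxe (a + b) 0 + maxe (- a) 0 + maxe (- b) 0 =
  maxe (- (a + b)) 0 + maxe a 0 + maxe b 0.
Proof.
case: a => [r||]; case: b => [s||] //=; rewrite ?(addNye, addeNy, addye, addey) //.
all: rewrite -?EFinD ?maxNye ?maxye ?mx0 //=.
rewrite -!EFinD; congr EFin.
rewrite !maxEle; repeat case: ifPn; rewrite -?ltNge; lra.
Qed.

Lemma pw_pos_sub a b : maxe (a + b) 0 <= maxe a 0 + maxe b 0.
Proof. ecases a b. Qed.

Lemma pw_neg_sub a b : maxe (- (a + b)) 0 <= maxe (- a) 0 + maxe (- b) 0.
Proof. ecases a b. Qed.

Lemma pw_F a b : maxe a 0 <= maxe (a + b) 0 + maxe (- b) 0.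
Proof. ecases a b. Qed.

End pw.

Section meas.
Context {R : realType}.

Lemma measurable_lne : measurable_fun setT (@lne R).
Proof.
rewrite (_ : @lne R = fun x => if x <= 0 then -oo else er_map (@ln R) x); last first.
  by apply: funext => -[r||] //=; case: ifP.
apply: measurable_fun_ifT.
- apply: (measurable_fun_bool true).
  exact: (@emeasurable_fun_infty_c _ _ R setT id measurableT (@measurable_id _ _ setT) 0).
- exact: measurable_cst.
- exact: (@measurable_er_map _ (measurableTypeR R) R _ (@measurable_ln R)).
Qed.

Lemma measurable_expeR : measurable_fun setT (@expeR R).
Proof.
rewrite (_ : @expeR R = fun x => if x == -oo then 0 else er_map (@expR R) x); last first.
  by apply: funext => -[r||].
apply: measurable_fun_ifT.
- apply: (measurable_fun_bool true).
  rewrite (_ : _ `&` _ = [set -oo]); first exact: emeasurable_set1.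
  by apply/seteqP; split => x /=; [case => _ /eqP|move=> ->; split].
- exact: measurable_cst.
- exact: (@measurable_er_map _ (measurableTypeR R) R _ (@measurable_expR R)).
Qed.

End meas.

Ltac sides := try exact: measurableT;
  try (by move=> x _; rewrite ?adde_ge0 ?funepos_ge0 ?funeneg_ge0);
  try (by repeat (apply: emeasurable_funD);
     first [exact: measurable_funepos | exact: measurable_funeneg | idtac];
     first [apply: measurable_funepos | apply: measurable_funeneg]; apply: emeasurable_funD).

Section ints.
Context {d : measure_display} {T : measurableType d} {R : realType} (P : probability T R).
Implicit Types (phi psi : T -> \bar R).

Definition Pp phi := \int[P]_x (phi^\+ x).
Definition Nn phi := \int[P]_x (phi^\- x).

Lemma Pp_ge0 phi : 0 <= Pp phi.
Proof. by apply: integral_ge0 => x _; exact: funepos_ge0. Qed.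
Lemma Nn_ge0 phi : 0 <= Nn phi.
Proof. by apply: integral_ge0 => x _; exact: funeneg_ge0. Qed.

Lemma intE phi : \int[P]_x phi x = Pp phi - Nn phi.
Proof. exact: integralE. Qed.

Lemma int_minusE phi : int_minus P phi = \int[P]_x phi x.
Proof. by rewrite /int_minus intE /Pp /Nn; case: ifPn => // /andP[/eqP-> /eqP->]. Qed.

Lemma int_plusE phi : int_plus P phi =
  if (Pp phi == +oo) && (Nn phi == +oo) then +oo else \int[P]_x phi x.
Proof. by []. Qed.

Lemma int_cst (k : \bar R) : \int[P]_x k = k.
Proof.
rewrite (integral_cst P measurableT k); transitivity (k * 1); last exact: mule1.
congr (_ * _); exact: probability_setT.
Qed.

Lemma int_cst' (k : \bar R) : \int[P]_x (cst k x) = k.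
Proof. exact: int_cst. Qed.

Lemma sum_id phi psi : measurable_fun setT phi -> measurable_fun setT psi ->
  Pp (phi \+ psi) + Nn phi + Nn psi = Nn (phi \+ psi) + Pp phi + Pp psi.
Proof.
move=> mphi mpsi.
have ms : measurable_fun setT (phi \+ psi) by exact: emeasurable_funD.
have E1 : \int[P]_x ((phi \+ psi)^\+ x + phi^\- x + psi^\- x) =
    Pp (phi \+ psi) + Nn phi + Nn psi.
  by rewrite ge0_integralD; sides; rewrite ge0_integralD; sides.
have E2 : \int[P]_x ((phi \+ psi)^\- x + phi^\+ x + psi^\+ x) =
    Nn (phi \+ psi) + Pp phi + Pp psi.
  by rewrite ge0_integralD; sides; rewrite ge0_integralD; sides.
rewrite -E1 -E2; apply: eq_integral => x _.
by rewrite !funeposE !funenegE pw_identity.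
Qed.

Lemma Nn_add_le phi psi : measurable_fun setT phi -> measurable_fun setT psi ->
  Nn (phi \+ psi) <= Nn phi + Nn psi.
Proof.
move=> mphi mpsi.
rewrite /Nn -ge0_integralD; sides.
apply: ge0_le_integral; sides.
by move=> x _; rewrite !funenegE pw_neg_sub.
Qed.

Lemma Pp_add_le phi psi : measurable_fun setT phi -> measurable_fun setT psi ->
  Pp (phi \+ psi) <= Pp phi + Pp psi.
Proof.
move=> mphi mpsi.
rewrite /Pp -ge0_integralD; sides.
apply: ge0_le_integral; sides.
by move=> x _; rewrite !funeposE pw_pos_sub.
Qed.

Lemma Pp_F_le phi psi : measurable_fun setT phi -> measurable_fun setT psi ->
  Pp phi <= Pp (phi \+ psi) + Nn psi.
Proof.
move=> mphi mpsi.
rewrite /Pp /Nn -ge0_integralD; sides.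
apply: ge0_le_integral; sides.
by move=> x _; rewrite !funeposE funenegE pw_F.
Qed.

End ints.

Section arith.
Context {R : realType}.

Lemma arithA (a b p1 n1 p2 n2 : \bar R) :
  0 <= a -> 0 <= p1 -> 0 <= p2 ->
  n1 \is a fin_num -> n2 \is a fin_num -> b \is a fin_num ->
  a + n1 + n2 = b + p1 + p2 -> a - b = (p1 - n1) + (p2 - n2).
Proof.
move: n1 n2 b => [n1||] [n2||] [b||] // + + + _ _ _.
case: a => [a||] // _; case: p1 => [p1||] // _; case: p2 => [p2||] // _ H;
  rewrite -?EFinD ?(addye, addey, addNye, addeNy) // in H *.
by case: H => H; congr EFin; lra.
Qed.
End arith.

Section arith2.
Context {R : realType}.
Lemma ge0_notfin (x : \bar R) : 0 <= x -> x \isn't a fin_num -> x = +oo.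
Proof. by case: x. Qed.

Lemma fin_le (x y : \bar R) : 0 <= x -> x <= y -> y \is a fin_num -> x \is a fin_num.
Proof.
by case: x => [r||] //; case: y => [s||] //.
Qed.
End arith2.

Section add.
Context {d : measure_display} {T : measurableType d} {R : realType} (P : probability T R).
Implicit Types (phi psi : T -> \bar R).

Lemma int_add phi psi : measurable_fun setT phi -> measurable_fun setT psi ->
  Nn P phi \is a fin_num -> Nn P psi \is a fin_num ->
  \int[P]_x (phi x + psi x) = \int[P]_x phi x + \int[P]_x psi x.
Proof.
move=> mphi mpsi f1 f2.
rewrite !intE; eapply arithA; [exact: Pp_ge0|exact: Pp_ge0|exact: Pp_ge0|exact: f1|exact: f2| |exact: sum_id].
eapply fin_le; [exact: Nn_ge0|exact: Nn_add_le|].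
by rewrite fin_numD f1 f2.
Qed.

Lemma Pp_cst (c : \bar R) : Pp P (cst c) = maxe c 0.
Proof.
rewrite /Pp -[RHS](int_cst P); apply: eq_integral => x _.
by rewrite funeposE.
Qed.

Lemma Nn_cst (c : \bar R) : Nn P (cst c) = maxe (- c) 0.
Proof.
rewrite /Nn -[RHS](int_cst P); apply: eq_integral => x _.
by rewrite funenegE.
Qed.

Lemma shift_int phi (k : R) : measurable_fun setT phi ->
  int_minus P (fun x => phi x + k%:E) = int_minus P phi + k%:E /\
  int_plus P (fun x => phi x + k%:E) = int_plus P phi + k%:E.
Proof.
move=> mphi.
have mc : forall c : \bar R, measurable_fun setT (@cst T _ c).
  by move=> c; exact: measurable_cst.
have fc : forall c : R, Nn P (cst c%:E) \is a fin_num /\ Pp P (cst c%:E) \is a fin_num.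
  by move=> c; rewrite Nn_cst Pp_cst mx0 -EFinN mx0.
have ms : measurable_fun setT (phi \+ cst k%:E) by exact: emeasurable_funD.
have phiE : phi = (phi \+ cst k%:E) \+ cst (- k)%:E.
  by apply: funext => x /=; rewrite EFinN addeK.
have hN1 := Nn_add_le P _ _ mphi (mc k%:E).
have hP1 := Pp_add_le P _ _ mphi (mc k%:E).
have hN2 := Nn_add_le P _ _ ms (mc (- k)%:E); rewrite -phiE in hN2.
have hP2 := Pp_add_le P _ _ ms (mc (- k)%:E); rewrite -phiE in hP2.
have [ck1 ck2] := fc k; have [ck3 ck4] := fc (- k)%R.
have [Nf|Ninf] := boolP (Nn P phi \is a fin_num).
  have Nsf : Nn P (phi \+ cst k%:E) \is a fin_num.
    by eapply fin_le; [exact: Nn_ge0|exact: hN1|]; rewrite fin_numD Nf.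
  have E : \int[P]_x (phi x + k%:E) = \int[P]_x phi x + k%:E.
    by rewrite (int_add _ _ mphi (mc k%:E) Nf ck1) int_cst.
  rewrite !int_minusE !int_plusE E; split => //.
  have e1 : (Nn P phi == +oo) = false by move: Nf; case: (Nn P phi).
  have e2 : (Nn P (fun x => phi x + k%:E) == +oo) = false.
    by move: Nsf; case: (Nn P _).
  by rewrite e1 e2 !andbF.
have NE := ge0_notfin _ (Nn_ge0 _ _) Ninf.
have NsE : Nn P (phi \+ cst k%:E) = +oo.
  apply: (ge0_notfin _ (Nn_ge0 _ _)); apply: contra Ninf => Nsf.
  by eapply fin_le; [exact: Nn_ge0|exact: hN2|]; rewrite fin_numD Nsf.
have [Pf|Pinf] := boolP (Pp P phi \is a fin_num).
  have Psf : Pp P (phi \+ cst k%:E) \is a fin_num.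
    by eapply fin_le; [exact: Pp_ge0|exact: hP1|]; rewrite fin_numD Pf.
  have I1 : \int[P]_x phi x = -oo.
    by rewrite intE NE; move: Pf; case: (Pp P phi).
  have I2 : \int[P]_x (phi x + k%:E) = -oo.
    by rewrite intE; move: NsE Psf; rewrite /Nn /Pp => -> ; case: (\int[P]_x _).
  rewrite !int_minusE !int_plusE I1 I2; split => //.
  have e1 : (Pp P phi == +oo) = false by move: Pf; case: (Pp P phi).
  have e2 : (Pp P (fun x => phi x + k%:E) == +oo) = false.
    by move: Psf; case: (Pp P _).
  by rewrite e1 e2.
have PE := ge0_notfin _ (Pp_ge0 _ _) Pinf.
have PsE : Pp P (phi \+ cst k%:E) = +oo.
  apply: (ge0_notfin _ (Pp_ge0 _ _)); apply: contra Pinf => Psf.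
  by eapply fin_le; [exact: Pp_ge0|exact: hP2|]; rewrite fin_numD Psf.
rewrite !int_minusE !int_plusE !intE.
move: NE NsE PE PsE; rewrite /Pp /Nn => -> -> -> ->.
by rewrite eqxx.
Qed.

End add.

Section pw2.
Context {R : realType}.
Implicit Types (x y : \bar R).

Lemma einv_ge0 x : 0 <= x -> 0 <= einv x.
Proof.
case: x => [r||] //=; rewrite lee_fin => r0; case: ifPn => // _.
by rewrite lee_fin invr_ge0.
Qed.

Lemma einvE x : 0 <= x -> einv x = expeR (- lne x).
Proof.
move=> x0; rewrite -lne_einv // lneK // in_itv /= leey andbT.
exact: einv_ge0.
Qed.

Lemma lne_mul x y : 0 <= x -> 0 <= y -> lne (x * y) = lne x + lne y.
Proof.
rewrite le_eqVlt => /predU1P[<-|x0]; first by rewrite mul0e le0_lneNy.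
rewrite le_eqVlt => /predU1P[<-|y0]; first by rewrite mule0 le0_lneNy // addeNy.
by rewrite lneM // in_itv /= leey andbT.
Qed.

Lemma mul_einv_le (c : R) x : (0 < c)%R -> 0 <= x -> x * (c%:E * einv x) <= c%:E.
Proof.
move=> c0; case: x => [r||] //=.
- rewrite lee_fin => r0; case: ifPn => [/eqP->|rn0]; first by rewrite mul0e lee_fin ltW.
  by rewrite -!EFinM lee_fin mulrCA divff // mulr1.
- by move=> _; rewrite mule0 mule0 lee_fin ltW.
Qed.

Lemma neg_if (a b : \bar R) : 0 <= a -> 0 <= b ->
  b - a =
  - (if (a == +oo) && (b == +oo) then +oo else a - b).
Proof.
case: a => [a||] //; case: b => [b||] // _ _ /=.
by rewrite -!EFinD opprB addrC.
Qed.

Lemma neg_if2 (a b : \bar R) : 0 <= a -> 0 <= b ->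
  (if (b == +oo) && (a == +oo) then +oo else b - a) = - (a - b).
Proof.
case: a => [a||] //; case: b => [b||] // _ _ /=.
by rewrite -!EFinD opprB addrC.
Qed.
End pw2.

Section norms.
Context {d : measure_display} {T : measurableType d} {R : realType} (P : probability T R).
Implicit Types (phi psi f g : T -> \bar R).

Lemma mlne f : measurable_fun setT f -> measurable_fun setT (fun x => lne (f x)).
Proof. by move=> mf; exact: (measurableT_comp measurable_lne mf). Qed.

Lemma int_minus_neg phi : int_minus P (fun x => - phi x) = - int_plus P phi.
Proof.
rewrite int_minusE int_plusE !intE /Pp /Nn funeposN funenegN.
by apply: neg_if; apply: integral_ge0 => x _; rewrite ?funepos_ge0 ?funeneg_ge0.
Qed.

Lemma int_plus_neg phi : int_plus P (fun x => - phi x) = - int_minus P phi.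
Proof.
rewrite int_minusE int_plusE !intE /Pp /Nn funeposN funenegN.
by apply: neg_if2; apply: integral_ge0 => x _; rewrite ?funepos_ge0 ?funeneg_ge0.
Qed.

Lemma norm0m_inv f : Lset f -> norm0m P (fun x => einv (f x)) = einv (norm0p P f).
Proof.
case=> mf f0; rewrite /norm0m /norm0p.
rewrite (_ : (fun x => lne (einv (f x))) = (fun x => - lne (f x))); last first.
  by apply: funext => x; rewrite lne_einv.
by rewrite int_minus_neg expeRN_einv.
Qed.

Lemma norm0p_inv f : Lset f -> norm0p P (fun x => einv (f x)) = einv (norm0m P f).
Proof.
case=> mf f0; rewrite /norm0m /norm0p.
rewrite (_ : (fun x => lne (einv (f x))) = (fun x => - lne (f x))); last first.
  by apply: funext => x; rewrite lne_einv.
by rewrite int_plus_neg expeRN_einv.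
Qed.

Lemma norm0p_scale f (c : R) : (0 < c)%R -> Lset f ->
  norm0p P (fun x => c%:E * f x) = c%:E * norm0p P f.
Proof.
move=> c0 [mf f0]; rewrite /norm0p.
rewrite (_ : (fun x => lne (c%:E * f x)) = (fun x => lne (f x) + (ln c)%:E)); last first.
  by apply: funext => x; rewrite lne_scale // addeC.
by rewrite (shift_int P _ (ln c) (mlne _ mf)).2 expeRD /= lnK ?posrE // muleC.
Qed.

Lemma norm0m_scale f (c : R) : (0 < c)%R -> Lset f ->
  norm0m P (fun x => c%:E * f x) = c%:E * norm0m P f.
Proof.
move=> c0 [mf f0]; rewrite /norm0m.
rewrite (_ : (fun x => lne (c%:E * f x)) = (fun x => lne (f x) + (ln c)%:E)); last first.
  by apply: funext => x; rewrite lne_scale // addeC.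
by rewrite (shift_int P _ (ln c) (mlne _ mf)).1 expeRD /= lnK ?posrE // muleC.
Qed.

Lemma int_mono phi psi : measurable_fun setT phi -> measurable_fun setT psi ->
  (forall x, phi x <= psi x) -> \int[P]_x phi x <= \int[P]_x psi x.
Proof.
move=> mphi mpsi h; rewrite !intE; apply: leeB.
- apply: ge0_le_integral; sides.
  by move=> x _; rewrite !funeposE ge_max !le_max h lexx orbT.
- apply: ge0_le_integral; sides.
  by move=> x _; rewrite !funenegE ge_max !le_max leeN2 h lexx orbT.
Qed.

Lemma jensen_lne h : measurable_fun setT h -> (forall x, 0 <= h x) ->
  \int[P]_x lne (h x) <= lne (\int[P]_x h x).
Proof.
move=> mh h0.
have mhc : forall c : R, measurable_fun setT (fun x => h x * c%:E).
  by move=> c; apply: emeasurable_funM => //; exact: measurable_cst.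
have bound : forall c : R, (0 < c)%R ->
    \int[P]_x lne (h x) <= (\int[P]_x h x) * (c^-1)%:E + (ln c - 1)%:E.
  move=> c c0.
  apply: (@le_trans _ _ (\int[P]_x (h x * (c^-1)%:E + (ln c - 1)%:E))).
    apply: int_mono.
    - exact: mlne.
    - by apply: emeasurable_funD => //; exact: measurable_cst.
    - by move=> x; rewrite addeC lne_jensen_pw.
  rewrite -int_minusE (shift_int P _ (ln c - 1) (mhc (c^-1)%R)).1 int_minusE.
  by rewrite ge0_integralZr // lee_fin invr_ge0 ltW.
have S0 : 0 <= \int[P]_x h x by apply: integral_ge0.
move: S0 bound; case: (\int[P]_x h x) => [r||] // + bound.
- rewrite le_eqVlt => /predU1P[r0|r0].
    rewrite -r0 le0_lneNy // leeNy_eq; rewrite -r0 in bound.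
    move: bound; case: (\int[P]_x lne (h x)) => [t||] // bound.
    + have := bound (expR t) (expR_gt0 t).
      by rewrite mul0e add0e expRK lee_fin; lra.
    + by have := bound 1%R ltr01; rewrite mul0e add0e ln1 leye_eq.

  rewrite lne_EFin //; apply: le_trans (bound r r0) _.
  by rewrite -EFinM -EFinD lee_fin divff ?gt_eqF // addrCA subrr addr0.
- by move=> _; rewrite leey.
Qed.

End norms.

Section ineq.
Context {d : measure_display} {T : measurableType d} {R : realType} (P : probability T R).
Implicit Types (phi psi f g : T -> \bar R).

Lemma Lset_einv f : Lset f -> Lset (fun x => einv (f x)).
Proof.
case=> mf f0; split; last by move=> x; exact: einv_ge0.
rewrite (_ : (fun x => einv (f x)) = (fun x => expeR (- lne (f x)))); last first.
  by apply: funext => x; rewrite einvE.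
apply: (measurableT_comp measurable_expeR).
apply: (measurableT_comp (@oppe_measurable R setT)).
exact: mlne.
Qed.

Lemma Lset_scale f (c : R) : (0 <= c)%R -> Lset f -> Lset (fun x => c%:E * f x).
Proof.
move=> c0 [mf f0]; split; first exact: measurable_funeM.
by move=> x; apply: mule_ge0 => //; rewrite lee_fin.
Qed.

Lemma ineq f g : Lset f -> Lset g ->
  norm0p P f * norm0m P g <= \int[P]_x (f x * g x).
Proof.
case=> mf f0 [mg g0].
have mF := mlne _ mf; have mG := mlne _ mg.
have mfg : measurable_fun setT (fun x => f x * g x) by exact: emeasurable_funM.
have fg0 : forall x, 0 <= f x * g x by move=> x; exact: mule_ge0.
have S0 : 0 <= \int[P]_x (f x * g x) by apply: integral_ge0.
have HE : (fun x => lne (f x * g x)) = (fun x => lne (f x)) \+ (fun x => lne (g x)).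
  by apply: funext => x; rewrite lne_mul.
rewrite /norm0p /norm0m int_minusE.
have [Gm|Gnm] := eqVneq (\int[P]_x lne (g x)) -oo.
  by rewrite Gm /= mule0.
have NGf : Nn P (fun x => lne (g x)) \is a fin_num.
  move: Gnm (Pp_ge0 P (fun x => lne (g x))) (Nn_ge0 P (fun x => lne (g x))).
  by rewrite intE; case: (Pp P _) => [p||]; case: (Nn P _) => [n||].
have PHle : Pp P (fun x => lne (f x * g x)) <= \int[P]_x (f x * g x).
  have mH := mlne _ mfg.
  rewrite /Pp; apply: ge0_le_integral; sides; first exact: mfg.
  by move=> x _; rewrite funeposE; apply: lne_pos_le.
have [PFinf|PFf] := boolP ((Pp P (fun x => lne (f x)) == +oo) &&
                           (Nn P (fun x => lne (f x)) == +oo)).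
  have Sinf : \int[P]_x (f x * g x) = +oo.
    apply: (ge0_notfin _ S0); apply/negP => Sf.
    have h := Pp_F_le P _ _ mF mG; rewrite -HE in h.
    move/andP: PFinf h => [/eqP -> _].
    have : Pp P (fun x => lne (f x * g x)) + Nn P (fun x => lne (g x)) \is a fin_num.
      rewrite fin_numD NGf andbT.
      by eapply fin_le; [exact: Pp_ge0|exact: PHle|exact: Sf].
    by case: (_ + _).
  by rewrite Sinf leey.
rewrite int_plusE (negbTE PFf).
have [Fm|Fnm] := eqVneq (\int[P]_x lne (f x)) -oo.
  by rewrite Fm /= mul0e.
have NFf : Nn P (fun x => lne (f x)) \is a fin_num.
  move: Fnm (Pp_ge0 P (fun x => lne (f x))) (Nn_ge0 P (fun x => lne (f x))).
  by rewrite intE; case: (Pp P _) => [p||]; case: (Nn P _) => [n||].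
have E : \int[P]_x lne (f x) + \int[P]_x lne (g x) = \int[P]_x lne (f x * g x).
  rewrite -(int_add P _ _ mF mG NFf NGf).
  by apply: eq_integral => x _; rewrite lne_mul.
rewrite -expeRD E.
apply: (@le_trans _ _ (expeR (lne (\int[P]_x (f x * g x))))).
  by rewrite lee_expeR; apply: jensen_lne.
by rewrite lneK // in_itv /= S0 leey.
Qed.

End ineq.

Lemma ge1_einv {R : realType} (y : \bar R) (c : R) : 0 <= y -> y \is a fin_num ->
  (fine y < c)%R -> 1 <= c%:E * einv y.
Proof.
case: y => [r||] // + _ /=; rewrite lee_fin => r0 rc.
have c0 : (0 < c)%R by lra.
case: ifPn => [_|rn0]; first by rewrite gt0_muley ?lte_fin // leey.
have rp : (0 < r)%R by rewrite lt_neqAle eq_sym rn0.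
by rewrite -EFinM lee_fin ler_pdivlMr // mul1r ltW.
Qed.

Section infs.
Context {d : measure_display} {T : measurableType d} {R : realType} (P : probability T R).
Implicit Types (phi psi f g : T -> \bar R).

Lemma norm0p_le_int f g : Lset f -> Lset g -> 1 <= norm0m P g ->
  norm0p P f <= \int[P]_x (f x * g x).
Proof.
move=> Lf Lg g1; apply: (le_trans _ (ineq P _ _ Lf Lg)).
by apply: lee_pemulr => //; exact: expeR_ge0.
Qed.

Lemma norm0m_le_int f g : Lset f -> Lset g -> 1 <= norm0p P g ->
  norm0m P f <= \int[P]_x (f x * g x).
Proof.
move=> Lf Lg g1.
rewrite (eq_integral (fun x => g x * f x)); last by move=> x _; rewrite muleC.
apply: (le_trans _ (ineq P _ _ Lg Lf)).
by apply: lee_pemull => //; exact: expeR_ge0.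
Qed.

Lemma int_f_ginv f (c : R) : Lset f -> (0 < c)%R ->
  \int[P]_x (f x * (c%:E * einv (f x))) <= c%:E.
Proof.
move=> Lf c0; have [mf f0] := Lf.
have [mg g0] := Lset_scale _ _ (ltW c0) (Lset_einv _ Lf).
apply: (@le_trans _ _ (\int[P]_x c%:E)); last by rewrite int_cst.
apply: ge0_le_integral.
all: try exact: measurableT.
all: try (by move=> x _; apply: mule_ge0 => //; exact: g0).
all: try (by apply: emeasurable_funM).
all: try exact: measurable_cst.
by move=> x _; exact: mul_einv_le.
Qed.

Lemma inf_p f : Lset f -> norm0p P f = ereal_inf [set \int[P]_x (f x * g x) | g in
                              [set g | Lset g /\ norm0m P g >= 1]].
Proof.
move=> Lf; apply/eqP; rewrite eq_le; apply/andP; split.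
  apply: le_ereal_inf_tmp => _ [g [Lg ng] <-].
  exact: norm0p_le_int.
have y0 : 0 <= norm0p P f by exact: expeR_ge0.
have [yfin|yinf] := boolP (norm0p P f \is a fin_num); last first.
  by rewrite (ge0_notfin _ y0 yinf) leey.
apply/lee_addgt0Pr => e e0.
have fy0 : (0 <= fine (norm0p P f))%R by exact: fine_ge0.
have c0 : (0 < fine (norm0p P f) + e)%R by lra.
apply: ge_ereal_inf.
exists (\int[P]_x (f x * ((fine (norm0p P f) + e)%R%:E * einv (f x)))).
  exists (fun x => (fine (norm0p P f) + e)%R%:E * einv (f x)) => //; split.
    exact: Lset_scale _ _ (ltW c0) (Lset_einv _ Lf).
  rewrite norm0m_scale //; last exact: Lset_einv.
  rewrite norm0m_inv //; apply: ge1_einv => //; lra.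
rewrite -[X in _ <= X + _](fineK yfin) -EFinD; exact: int_f_ginv.
Qed.

Lemma inf_m f : Lset f -> norm0m P f = ereal_inf [set \int[P]_x (f x * g x) | g in
                              [set g | Lset g /\ norm0p P g >= 1]].
Proof.
move=> Lf; apply/eqP; rewrite eq_le; apply/andP; split.
  apply: le_ereal_inf_tmp => _ [g [Lg ng] <-].
  exact: norm0m_le_int.
have y0 : 0 <= norm0m P f by exact: expeR_ge0.
have [yfin|yinf] := boolP (norm0m P f \is a fin_num); last first.
  by rewrite (ge0_notfin _ y0 yinf) leey.
apply/lee_addgt0Pr => e e0.
have fy0 : (0 <= fine (norm0m P f))%R by exact: fine_ge0.
have c0 : (0 < fine (norm0m P f) + e)%R by lra.
apply: ge_ereal_inf.
exists (\int[P]_x (f x * ((fine (norm0m P f) + e)%R%:E * einv (f x)))).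
  exists (fun x => (fine (norm0m P f) + e)%R%:E * einv (f x)) => //; split.
    exact: Lset_scale _ _ (ltW c0) (Lset_einv _ Lf).
  rewrite norm0p_scale //; last exact: Lset_einv.
  rewrite norm0p_inv //; apply: ge1_einv => //; lra.
rewrite -[X in _ <= X + _](fineK yfin) -EFinD; exact: int_f_ginv.
Qed.

End infs.

Section hyp.
Context {d : measure_display} {T : measurableType d} {R : realType} (P : probability T R).
Implicit Types (phi psi f g : T -> \bar R).

Lemma PN_ae f g : Lset f -> Lset g -> Defs.ae_eq P f g ->
  Pp P (fun x => lne (f x)) = Pp P (fun x => lne (g x)) /\
  Nn P (fun x => lne (f x)) = Nn P (fun x => lne (g x)).
Proof.
move=> [mf f0] [mg g0] hfg.
have mF := mlne _ mf; have mG := mlne _ mg.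
split.
- rewrite /Pp; apply: ae_eq_integral => //.
  + exact: measurable_funepos.
  + exact: measurable_funepos.
  + by apply: filterS hfg => x fx _; rewrite !funeposE fx.
- rewrite /Nn; apply: ae_eq_integral => //.
  + exact: measurable_funeneg.
  + exact: measurable_funeneg.
  + by apply: filterS hfg => x fx _; rewrite !funenegE fx.
Qed.

Lemma lne_Lzero : (fun x => lne (Lzero x)) = (fun _ : T => -oo :> \bar R).
Proof. by apply: funext => x; rewrite /Lzero le0_lneNy. Qed.

Lemma Lset_lin (l1 l2 : R) f1 f2 : (0 <= l1)%R -> (0 <= l2)%R -> Lset f1 -> Lset f2 ->
  Lset (Ladd (Lscale l1 f1) (Lscale l2 f2)).
Proof.
move=> l10 l20 L1 L2.
have [m1 p1] := Lset_scale _ _ l10 L1; have [m2 p2] := Lset_scale _ _ l20 L2.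
split; first exact: emeasurable_funD.
by move=> x; apply: adde_ge0; [exact: p1|exact: p2].
Qed.

Lemma int_lin (l1 l2 : R) f1 f2 g : (0 <= l1)%R -> (0 <= l2)%R -> Lset f1 -> Lset f2 -> Lset g ->
  \int[P]_x (Ladd (Lscale l1 f1) (Lscale l2 f2) x * g x) =
  l1%:E * \int[P]_x (f1 x * g x) + l2%:E * \int[P]_x (f2 x * g x).
Proof.
move=> l10 l20 [mf1 f10] [mf2 f20] [mg g0].
have m1 : measurable_fun setT (fun x => f1 x * g x) by exact: emeasurable_funM.
have m2 : measurable_fun setT (fun x => f2 x * g x) by exact: emeasurable_funM.
have n1 : forall x, 0 <= f1 x * g x by move=> x; exact: mule_ge0.
have n2 : forall x, 0 <= f2 x * g x by move=> x; exact: mule_ge0.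
transitivity (\int[P]_x (l1%:E * (f1 x * g x) + l2%:E * (f2 x * g x))).
  apply: eq_integral => x _; rewrite /Ladd /Lscale ge0_muleDl ?muleA //.
  - by apply: mule_ge0 => //; rewrite lee_fin.
  - by apply: mule_ge0 => //; rewrite lee_fin.
rewrite ge0_integralD.
all: try exact: measurableT.
all: try (by move=> x _; apply: mule_ge0 => //; rewrite lee_fin).
all: try (by apply: measurable_funeM).
by rewrite !ge0_integralZl // ?lee_fin // => x _.
Qed.

Lemma hyp_p : is_hyperbolic_norm P (norm0p P).
Proof.
split.
- move=> f g Lf Lg hfg; have [h1 h2] := PN_ae _ _ Lf Lg hfg.
  by rewrite /norm0p !int_plusE !intE h1 h2.
- by move=> f _; exact: expeR_ge0.
- rewrite /norm0p lne_Lzero int_plusE.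
  have -> : Pp P (fun _ : T => -oo) = maxe -oo 0 := Pp_cst P -oo.
  by rewrite maxNye eq_sym /= int_cst.
- move=> l1 l2 f1 f2 l10 l20 L1 L2.
  rewrite (inf_p P _ (Lset_lin _ _ _ _ l10 l20 L1 L2)).
  apply: le_ereal_inf_tmp => _ [g [Lg ng] <-].
  rewrite int_lin //; apply: leeD; apply: lee_wpmul2l; rewrite ?lee_fin //;
    exact: norm0p_le_int.
Qed.

Lemma hyp_m : is_hyperbolic_norm P (norm0m P).
Proof.
split.
- move=> f g Lf Lg hfg; have [h1 h2] := PN_ae _ _ Lf Lg hfg.
  by rewrite /norm0m !int_minusE !intE h1 h2.
- by move=> f _; exact: expeR_ge0.
- by rewrite /norm0m lne_Lzero int_minusE int_cst.
- move=> l1 l2 f1 f2 l10 l20 L1 L2.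
  rewrite (inf_m P _ (Lset_lin _ _ _ _ l10 l20 L1 L2)).
  apply: le_ereal_inf_tmp => _ [g [Lg ng] <-].
  rewrite int_lin //; apply: leeD; apply: lee_wpmul2l; rewrite ?lee_fin //;
    exact: norm0m_le_int.
Qed.

End hyp.

Theorem mainTheorem19 (d : measure_display) (T : measurableType d) (R : realType)
    (P : probability T R) :
  is_hyperbolic_norm P (norm0p P) /\ is_hyperbolic_norm P (norm0m P) /\
  (forall f g, Lset f -> Lset g ->
     \int[P]_x (f x * g x) >= norm0p P f * norm0m P g) /\
  (forall f, Lset f ->
     norm0p P f = ereal_inf [set \int[P]_x (f x * g x) | g in
                              [set g | Lset g /\ norm0m P g >= 1]]) /\
  (forall f, Lset f ->
     norm0m P f = ereal_inf [set \int[P]_x (f x * g x) | g in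
                              [set g | Lset g /\ norm0p P g >= 1]]) /\
  (forall f, Lset f -> norm0p P f = einv (norm0m P (fun x => einv (f x)))) /\
  (forall f, Lset f -> norm0m P f = einv (norm0p P (fun x => einv (f x)))).
Proof.
split; first exact: hyp_p.
split; first exact: hyp_m.
split; first by move=> f g Lf Lg; exact: ineq.
split; first by move=> f Lf; exact: inf_p.
split; first by move=> f Lf; exact: inf_m.
split.
- by move=> f Lf; rewrite norm0m_inv // einvK //; exact: expeR_ge0.
- by move=> f Lf; rewrite norm0p_inv // einvK //; exact: expeR_ge0.
Qed.
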